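(* There exists a planar graph $G$ with $HG(G)=12$. Specifically, let $m=66^{144}$ and let $G$ be the graph with vertex set $\{u,v\}\cup\{x_i,y_i: 1\le i\le m\}$ whose edges are $uv$, the $m$ edges $x_iy_i$ ($1\le i\le m$), and all edges $ux_i,uy_i,vx_i,vy_i$ ($1\le i\le m$). Then $G$ is planar and $HG(G)=12$.
   Context: The hat guessing game on a finite simple graph $G$ with $q$ colors: each vertex (player) is assigned a hat whose color is an arbitrary element of a fixed set $Q$ of $q$ colors. Each player sees the hat colors of exactly its neighbors in $G$ (not its own). Before the colors are assigned, the players fix a deterministic guessing strategy: for each vertex $w$, a function from the colorings of the neighbors of $w$ to $Q$, which is $w$'s guess for its own color. No communication is allowed. The strategy is winning if for every assignment of colors from $Q$ to all vertices, at least one vertex guesses its own color correctly. The hat guessing number $HG(G)$ is the largest integer $q$ for which a winning strategy with $q$ colors exists. *)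

(* Defs.v *)
From Stdlib Require Import Reals.
From mathcomp Require Import all_boot.

Set Implicit Arguments.
Unset Strict Implicit.
Unset Printing Implicit Defensive.

(* A simple graph is an irreflexive symmetric relation e on a finType T. *)

Definition hat_local (T : finType) (e : rel T) (q : nat)
  (f : T -> (T -> 'I_q) -> 'I_q) : Prop :=
  forall (w : T) (c c' : T -> 'I_q),
    (forall x, e w x -> c x = c' x) -> f w c = f w c'.

Definition hat_winning (T : finType) (q : nat)
  (f : T -> (T -> 'I_q) -> 'I_q) : Prop :=
  forall c : T -> 'I_q, exists w : T, f w c = c w.

Definition hat_win (T : finType) (e : rel T) (q : nat) : Prop :=
  exists f : T -> (T -> 'I_q) -> 'I_q, hat_local e f /\ hat_winning f.

Definition HG_is (T : finType) (e : rel T) (k : nat) : Prop :=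
  hat_win e k /\ (forall q, hat_win e q -> q <= k).

Open Scope R_scope.

Definition in01 (t : R) : Prop := 0 <= t <= 1.

Definition arc_continuous (g : R -> R * R) : Prop :=
  forall t, in01 t -> forall eps, 0 < eps -> exists delta, 0 < delta /\
    forall s, in01 s -> Rabs (s - t) < delta ->
      Rabs (fst (g s) - fst (g t)) < eps /\ Rabs (snd (g s) - snd (g t)) < eps.

Definition arc_injective (g : R -> R * R) : Prop :=
  forall s t, in01 s -> in01 t -> g s = g t -> s = t.

Definition planar (T : finType) (e : rel T) : Prop :=
  exists (p : T -> R * R) (g : T -> T -> R -> R * R),
    injective p /\
    (forall x y, e x y ->
       arc_continuous (g x y) /\ arc_injective (g x y) /\
       g x y 0 = p x /\ g x y 1 = p y /\
       (forall t, in01 t -> g y x t = g x y (1 - t))) /\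
    (forall x y z s, e x y -> 0 < s < 1 -> g x y s <> p z) /\
    (forall x y x' y' s t, e x y -> e x' y' ->
       ~ ((x = x' /\ y = y') \/ (x = y' /\ y = x')) ->
       0 < s < 1 -> in01 t -> g x y s <> g x' y' t).

Close Scope R_scope.

(* Vertices: None = u, Some None = v, Some (Some (i,false)) = x_i,
   Some (Some (i,true)) = y_i, for i : 'I_m (indices 1..m shifted to 0..m-1). *)
Definition hvert (m : nat) : finType := option (option ('I_m * bool)).

Definition hedge (m : nat) : rel (hvert m) := fun a b =>
  match a, b with
  | None, Some _ => true
  | Some _, None => true
  | Some None, Some (Some _) => true
  | Some (Some _), Some None => true
  | Some (Some (i, b1)), Some (Some (j, b2)) => (i == j) && (b1 != b2)
  | _, _ => false
  end.
Arguments hedge : clear implicits.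

(* Main.v *)
Require Import Defs.
From Stdlib Require Import Reals.
From mathcomp Require Import all_boot.
From mathcomp Require Import zify.
From Stdlib Require Import Lra Lia.
Set Implicit Arguments. Unset Strict Implicit. Unset Printing Implicit Defensive.

Section Cover.
Variable T : finType.

Definition covers (S : {set T * T}) (F G : T -> T) :=
  forall p, p \in S -> (p.1 == F p.2) || (p.2 == G p.1).

Lemma six_le (S : {set T * T}) (s : seq (T * T)) :
  uniq s -> {subset s <= S} -> size s <= #|S|.
Proof.
move=> us sub; rewrite -(card_uniqP us); apply: subset_leq_card; exact/subsetP.
Qed.

Lemma two_vals (S : {set T * T}) (pr : T * T -> T) (p0 : T * T) :
  p0 \in S -> #|S| <= 5 ->
  (forall p, p \in S -> exists2 q, q \in S & (q != p) && (pr q == pr p)) ->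
  exists a1 a2, forall p, p \in S -> (pr p == a1) || (pr p == a2).
Proof.
move=> p0S cS rich.
case: (boolP [forall p in S, pr p == pr p0]) => [/forall_inP H|].
  by exists (pr p0), (pr p0) => p /H ->.
rewrite negb_forall_in => /exists_inP [p1 p1S np1].
exists (pr p0), (pr p1) => p pS.
apply/negPn/negP; rewrite negb_or => /andP [n0 n1].
have [q0 q0S /andP [nq0 e0]] := rich _ p0S.
have [q1 q1S /andP [nq1 e1]] := rich _ p1S.
have [q qS /andP [nq e]] := rich _ pS.
have ne : forall x y, pr x != pr y -> x != y.
  by move=> x y; apply: contra => /eqP ->.
have := @six_le S [:: p0; q0; p1; q1; p; q].
rewrite /= !inE.
have h1 : p0 != q0 by rewrite eq_sym.
have h2 : p0 != p1 by apply: ne; rewrite eq_sym.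
have h3 : p0 != q1 by apply: ne; rewrite (eqP e1) eq_sym.
have h4 : p0 != p by apply: ne; rewrite eq_sym.
have h5 : p0 != q by apply: ne; rewrite (eqP e) eq_sym.
have h6 : q0 != p1 by apply: ne; rewrite (eqP e0) eq_sym.
have h7 : q0 != q1 by apply: ne; rewrite (eqP e0) (eqP e1) eq_sym.
have h8 : q0 != p by apply: ne; rewrite (eqP e0) eq_sym.
have h9 : q0 != q by apply: ne; rewrite (eqP e0) (eqP e) eq_sym.
have h10 : p1 != q1 by rewrite eq_sym.
have h11 : p1 != p by apply: ne; rewrite eq_sym.
have h12 : p1 != q by apply: ne; rewrite (eqP e) eq_sym.
have h13 : q1 != p by apply: ne; rewrite (eqP e1) eq_sym.
have h14 : q1 != q by apply: ne; rewrite (eqP e1) (eqP e) eq_sym.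
have h15 : p != q by rewrite eq_sym.
rewrite (negbTE h1) (negbTE h2) (negbTE h3) (negbTE h4) (negbTE h5) (negbTE h6) (negbTE h7) (negbTE h8) (negbTE h9) (negbTE h10) (negbTE h11) (negbTE h12) (negbTE h13) (negbTE h14) (negbTE h15) /=.
move=> /(_ isT) H; have : 6 <= 5.
  apply: leq_trans cS; apply: H => x; rewrite !inE.
  by case/orP=> [/eqP->//|]; case/orP=> [/eqP->//|]; case/orP=> [/eqP->//|];
    case/orP=> [/eqP->//|]; case/orP=> [/eqP->//|] /eqP->.
by [].
Qed.

Lemma cover5 (S : {set T * T}) : #|S| <= 5 ->
  exists F G : {ffun T -> T}, covers S F G.
Proof.
have [n] := ubnP #|S|; elim: n S => // n IH S ltS cS.
case: (boolP [exists p in S, [forall q in S, (q.2 == p.2) ==> (q == p)]]).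
  case/exists_inP => p pS /forall_inP Hp.
  have c' : #|S :\ p| < n by move: ltS; rewrite (cardsD1 p S) pS.
  have [F [G cov]] := IH _ c' (leq_trans (subset_leq_card (subsetDl S [set p])) cS).
  exists [ffun b => if b == p.2 then p.1 else F b], G => q qS; rewrite ffunE.
  case: (eqVneq q p) => [->|nqp]; first by rewrite eqxx eqxx.
  have qS' : q \in S :\ p by rewrite !inE nqp.
  case: (eqVneq q.2 p.2) => [e|_]; last exact: cov.
  by move: (Hp _ qS); rewrite e eqxx /= (negbTE nqp).
rewrite negb_exists => /forallP nA.
case: (boolP [exists p in S, [forall q in S, (q.1 == p.1) ==> (q == p)]]).
  case/exists_inP => p pS /forall_inP Hp.
  have c' : #|S :\ p| < n by move: ltS; rewrite (cardsD1 p S) pS.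
  have [F [G cov]] := IH _ c' (leq_trans (subset_leq_card (subsetDl S [set p])) cS).
  exists F, [ffun a => if a == p.1 then p.2 else G a] => q qS; rewrite ffunE.
  case: (eqVneq q p) => [->|nqp]; first by rewrite eqxx eqxx orbT.
  have qS' : q \in S :\ p by rewrite !inE nqp.
  case: (eqVneq q.1 p.1) => [e|_]; last exact: cov.
  by move: (Hp _ qS); rewrite e eqxx /= (negbTE nqp).
rewrite negb_exists => /forallP nB.
case: (set_0Vmem S) => [->|[p0 p0S]].
  by exists [ffun x => x], [ffun x => x] => p; rewrite inE.
have richB : forall p, p \in S -> exists2 q, q \in S & (q != p) && (q.1 == p.1).
  move=> p pS; move: (nB p); rewrite pS /= negb_forall_in => /exists_inP [q qS].
  by rewrite negb_imply => /andP [e ne]; exists q => //; rewrite ne e.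
have richA : forall p, p \in S -> exists2 q, q \in S & (q != p) && (q.2 == p.2).
  move=> p pS; move: (nA p); rewrite pS /= negb_forall_in => /exists_inP [q qS].
  by rewrite negb_imply => /andP [e ne]; exists q => //; rewrite ne e.
have [a1 [a2 Ha]] := two_vals p0S cS richB.
have [b1 [b2 Hb]] := two_vals p0S cS richA.
exists [ffun b => if b == b1 then a1 else a2], [ffun a => if a == a1 then b2 else b1].
move=> [x y] pS; rewrite !ffunE /=.
move: (Ha _ pS) (Hb _ pS) => /= /orP [] /eqP -> /orP [] /eqP ->.
by case: (eqVneq b2 b1) => [e|_]; case: (eqVneq a2 a1) => [e'|_];
  rewrite ?e ?e' ?eqxx ?orbT.
all: by case: (eqVneq b2 b1) => [e|_]; case: (eqVneq a2 a1) => [e'|_];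
  rewrite ?e ?e' ?eqxx ?orbT.
Qed.
End Cover.

Definition md (k : nat) : 'I_12 := inord (k %% 12).

Lemma md_val k : nat_of_ord (md k) = k %% 12.
Proof. by rewrite /md inordK //; have := ltn_pmod k (isT : 0 < 12). Qed.

Lemma classes : forall x y : 'I_12, exists t : 'I_6,
  (x == md (y + 2 * t)) || (y == md (x + 2 * t + 1)).
Proof.
have H : all (fun x => all (fun y => has (fun t =>
   (x == (y + 2 * t) %% 12) || (y == (x + 2 * t + 1) %% 12)) (iota 0 6))
   (iota 0 12)) (iota 0 12) by [].
move=> x y; move/allP: H => /(_ x); rewrite mem_iota ltn_ord => /(_ isT).
move/allP => /(_ y); rewrite mem_iota ltn_ord => /(_ isT) /hasP [t].
rewrite mem_iota /= => tl Ht; exists (Ordinal tl).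
by rewrite -!val_eqE /= !md_val.
Qed.


Definition FT := {ffun 'I_12 * 'I_12 -> 'I_6}.

Definition phi (i : nat) : FT :=
  match (insub i : option 'I_#|FT|) with Some k => enum_val k | None => [ffun => ord0] end.

Lemma phi_rank (f : FT) : phi (enum_rank f) = f.
Proof. by rewrite /phi valK enum_rankK. Qed.

Lemma card_FT : #|FT| = 6 ^ 144.
Proof. by rewrite card_ffun card_prod !card_ord. Qed.

Section Lower.
Variable m : nat.
Hypothesis hm : 6 ^ 144 <= m.

Local Notation V := (hvert m).
Local Notation Q := 'I_12.
Definition xv (i : 'I_m) : V := Some (Some (i, false)).
Definition yv (i : 'I_m) : V := Some (Some (i, true)).

Definition pwin (i : 'I_m) (p : Q * Q) (c : V -> Q) : bool :=
  (c (xv i) == md (c (yv i) + 2 * phi i p)) || (c (yv i) == md (c (xv i) + 2 * phi i p + 1)).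

Definition Sset (c : V -> Q) : {set Q * Q} := [set p | [forall i : 'I_m, ~~ pwin i p c]].

Definition FGof (S : {set Q * Q}) : {ffun Q -> Q} * {ffun Q -> Q} :=
  odflt ([ffun x => x], [ffun x => x])
   [pick FG : {ffun Q -> Q} * {ffun Q -> Q} | [forall p in S, (p.1 == FG.1 p.2) || (p.2 == FG.2 p.1)]].

Definition strat (w : V) (c : V -> Q) : Q :=
  match w with
  | None => (FGof (Sset c)).1 (c (Some None))
  | Some None => (FGof (Sset c)).2 (c None)
  | Some (Some (i, false)) => md (c (yv i) + 2 * phi i (c None, c (Some None)))
  | Some (Some (i, true)) => md (c (xv i) + 2 * phi i (c None, c (Some None)) + 1)
  end.

Lemma Sset_small c : #|Sset c| <= 5.
Proof.
rewrite leqNgt; apply/negP => big.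
set S := Sset c in big *.
set s := enum S.
pose psi : FT := [ffun p => inord (index p s)].
have ir : enum_rank psi < m by apply: leq_trans hm; rewrite -card_FT.
pose i := Ordinal ir.
have phii : phi i = psi by rewrite phi_rank.
have [t Ht] := classes (c (xv i)) (c (yv i)).
have ts : t < size s by rewrite -cardE; apply: leq_trans big; rewrite ltnS -ltnS ltn_ord.
pose p := nth (ord0, ord0) s t.
have pS : p \in S by rewrite -mem_enum; apply: mem_nth.
have ip : index p s = t by rewrite index_uniq // enum_uniq.
have psip : psi p = t by rewrite ffunE ip inord_val.
move: pS; rewrite inE => /forallP /(_ i); rewrite /pwin phii psip.
by rewrite Ht.
Qed.

Lemma FGof_cov (S : {set Q * Q}) : #|S| <= 5 ->
  forall p, p \in S -> (p.1 == (FGof S).1 p.2) || (p.2 == (FGof S).2 p.1).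
Proof.
move=> small; have [F [G cov]] := cover5 small.
rewrite /FGof; case: pickP => [FG /forall_inP H //|/(_ (F, G))].
by move/negbT/forall_inP => [] p pS; apply: cov.
Qed.

Lemma strat_win : hat_winning strat.
Proof.
move=> c.
case: (boolP [exists i, pwin i (c None, c (Some None)) c]).
  case/existsP => i; rewrite /pwin => /orP [] /eqP H.
    by exists (xv i); rewrite /= H.
  by exists (yv i); rewrite /= H.
rewrite negb_exists => /forallP H.
have inS : (c None, c (Some None)) \in Sset c by rewrite inE; apply/forallP.
move: (FGof_cov (Sset_small c) inS) => /orP [] /eqP /= e.
  by exists None; rewrite /= e.
by exists (Some None); rewrite /= e.
Qed.

Lemma strat_local : hat_local (hedge m) strat.
Proof.
move=> w c c' H.
have eS : (forall i, c (xv i) = c' (xv i)) -> (forall i, c (yv i) = c' (yv i)) ->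
   Sset c = Sset c'.
  move=> Hx Hy; apply/setP => p; rewrite !inE; apply: eq_forallb => i.
  by rewrite /pwin Hx Hy.
case: w H => [[[i [|]]|]|] H /=.
- have e1 := H None isT. have e2 := H (Some None) isT.
  have e3 : c (xv i) = c' (xv i) by apply: H; rewrite /= eqxx.
  by rewrite e1 e2 e3.
- have e1 := H None isT. have e2 := H (Some None) isT.
  have e3 : c (yv i) = c' (yv i) by apply: H; rewrite /= eqxx.
  by rewrite e1 e2 e3.
- have e1 := H None isT.
  by rewrite e1 eS // => j; apply: H.
- have e1 := H (Some None) isT.
  by rewrite e1 eS // => j; apply: H.
Qed.

Lemma lower_win : hat_win (hedge m) 12.
Proof. by exists strat; split; [exact: strat_local | exact: strat_win]. Qed.
End Lower.

Section Upper.
Variable m : nat.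
Local Notation V := (hvert m).

Lemma upper q : hat_win (hedge m) q -> q <= 12.
Proof.
move=> hw; rewrite leqNgt; apply/negP => big; move: hw.
case: q big => // n big [f [loc win]].
rewrite ltnS in big.
pose Q := 'I_n.+1.
pose e2 (a : 'I_2) : Q := inord a.
pose e3 (b : 'I_3) : Q := inord b.
have e2_inj : injective e2.
  move=> x y /(congr1 (@nat_of_ord _)); rewrite /e2 !inordK; first exact: val_inj.
  by have := ltn_ord y; lia.
  by have := ltn_ord x; lia.
have e3_inj : injective e3.
  move=> x y /(congr1 (@nat_of_ord _)); rewrite /e3 !inordK; first exact: val_inj.
  by have := ltn_ord y; lia.
  by have := ltn_ord x; lia.
pose xv (i : 'I_m) : V := Some (Some (i, false)).
pose yv (i : 'I_m) : V := Some (Some (i, true)).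
pose cset (a b : Q) (w : V) (z : Q) : V -> Q := fun x =>
  if x == None then a else if x == Some None then b else if x == w then z else ord0.
pose gx i (a : 'I_2) (b : 'I_3) z := f (xv i) (cset (e2 a) (e3 b) (yv i) z).
pose gy i (a : 'I_2) (b : 'I_3) z := f (yv i) (cset (e2 a) (e3 b) (xv i) z).
pose Bad i := [set p : Q * Q | [exists a : 'I_2, exists b : 'I_3,
   (p.1 == gx i a b p.2) || (p.2 == gy i a b p.1)]].
pose h i (k : 'I_2 * 'I_3 * bool * Q) : Q * Q :=
  let: (a, b, sd, z) := k in if sd then (gx i a b z, z) else (z, gy i a b z).
have Bad_small i : #|Bad i| < #|{: Q * Q}|.
  apply: (@leq_ltn_trans #|h i @: {: 'I_2 * 'I_3 * bool * Q}|).
    apply: subset_leq_card; apply/subsetP => p; rewrite inE.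
    case/existsP => a /existsP [b] /orP [] /eqP e.
      by apply/imsetP; exists (a, b, true, p.2) => //; rewrite /= -e -surjective_pairing.
    by apply/imsetP; exists (a, b, false, p.1) => //; rewrite /= -e -surjective_pairing.
  apply: leq_ltn_trans (leq_imset_card _ _) _.
  rewrite !card_prod card_bool !card_ord.
  by rewrite ltn_pmul2r.
pose col i := odflt (ord0, ord0) [pick p | p \notin Bad i].
have colB i : col i \notin Bad i.
  rewrite /col; case: pickP => [p //|none].
  have : #|{: Q * Q}| <= #|Bad i|.
    by apply: subset_leq_card; apply/subsetP => p _; move: (none p) => /negbFE.
  by rewrite leqNgt Bad_small.
pose cs (a b : Q) : V -> Q := fun w => match w with
  | None => a | Some None => b
  | Some (Some (i, false)) => (col i).1 | Some (Some (i, true)) => (col i).2 end.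
have fx i a b : f (xv i) (cs (e2 a) (e3 b)) = gx i a b (col i).2.
  apply: loc => -[[[j bb]|]|] //= /andP [/eqP <-]; case: bb => //= _.
  by rewrite /cset /= eqxx.
have fy i a b : f (yv i) (cs (e2 a) (e3 b)) = gy i a b (col i).1.
  apply: loc => -[[[j bb]|]|] //= /andP [/eqP <-]; case: bb => //= _.
  by rewrite /cset /= eqxx.
have fu a a' b : f None (cs a b) = f None (cs a' b).
  by apply: loc => -[[[j bb]|]|].
have fv a b b' : f (Some None) (cs a b) = f (Some None) (cs a b').
  by apply: loc => -[[[j bb]|]|].
pose G a := f (Some None) (cs a (e3 ord0)).
have [b3 Hb3] : exists b3 : 'I_3, forall a : 'I_2, e3 b3 != G (e2 a).
  case: (boolP [exists b3, [forall a, e3 b3 != G (e2 a)]]).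
    by case/existsP => b3 /forallP H; exists b3.
  rewrite negb_exists => /forallP H.
  have H' b : [exists a, e3 b == G (e2 a)].
    by move: (H b); rewrite negb_forall => /existsP [a]; rewrite negbK => e; apply/existsP; exists a.
  pose ab b := odflt ord0 [pick a | e3 b == G (e2 a)].
  have abP b : e3 b == G (e2 (ab b)).
    rewrite /ab; case: pickP => [a //|none].
    by move: (H' b) => /existsP [a]; rewrite none.
  have inj : injective ab.
    by move=> x y E; apply: e3_inj; rewrite (eqP (abP x)) (eqP (abP y)) E.
  by have := leq_card ab inj; rewrite !card_ord.
pose F := f None (cs (e2 ord0) (e3 b3)).
have [a2 Ha2] : exists a2 : 'I_2, e2 a2 != F.
  case: (eqVneq (e2 ord0) F) => [E|N]; last by exists ord0.
  exists ord_max; rewrite -E; apply/eqP => /e2_inj.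
  by move/(congr1 (@nat_of_ord _)).
have [w Hw] := win (cs (e2 a2) (e3 b3)).
case: w Hw => [[[i [|]]|]|].
- rewrite fy /= => E.
  move/negP: (colB i); apply; rewrite inE; apply/existsP; exists a2;
  by apply/existsP; exists b3; rewrite E eqxx orbT.
- rewrite fx /= => E.
  move/negP: (colB i); apply; rewrite inE; apply/existsP; exists a2;
  by apply/existsP; exists b3; rewrite E eqxx.
- rewrite /= (fv _ _ (e3 ord0)) => E.
  by move: (Hb3 a2); rewrite /G E eqxx.
- rewrite /= (fu _ (e2 ord0)) => E.
  by move: Ha2; rewrite /F -E eqxx.
Qed.
End Upper.

Section Planar.
Variable m : nat.
Local Notation V := (hvert m).
Local Open Scope R_scope.

Definition code (w : 'I_m * bool) : nat := (2 * nat_of_ord w.1 + 1 + nat_of_bool w.2)%nat.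
Arguments code : simpl never.

Definition pos (x : V) : R * R := match x with
  | None => (0, 1) | Some None => (0, -1) | Some (Some w) => (INR (code w), 0) end.
Definition lin (P Q : R * R) (t : R) : R * R :=
  ((1 - t) * fst P + t * fst Q, (1 - t) * snd P + t * snd Q).
Definition gg (x y : V) := lin (pos x) (pos y).

Lemma code_ge1 w : 1 <= INR (code w).
Proof. rewrite /code; change 1 with (INR 1); apply: le_INR; lia. Qed.

Lemma code_inj w w' : INR (code w) = INR (code w') -> w = w'.
Proof.
move/INR_eq; case: w w' => [i b] [j c]; rewrite /code /=.
case: b; case: c => /= E; try lia.
- have e : nat_of_ord i = nat_of_ord j by lia.
  by rewrite (val_inj e).
- have e : nat_of_ord i = nat_of_ord j by lia.
  by rewrite (val_inj e).
Qed.

Lemma not_int (n k : nat) X : INR n < X < INR n + 1 -> X <> INR k.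
Proof.
move=> [h1 h2] e; subst X.
have a := INR_lt _ _ h1.
have : INR k < INR (n + 1) by rewrite plus_INR INR_1.
move/INR_lt; lia.
Qed.

Lemma same_int (n k : nat) X : INR n < X < INR n + 1 -> INR k <= X <= INR k + 1 -> n = k.
Proof.
move=> [h1 h2] [h3 h4].
have a : INR n < INR (k + 1) by rewrite plus_INR INR_1; lra.
have b : INR k < INR (n + 1) by rewrite plus_INR INR_1; lra.
have a' := INR_lt _ _ a; have b' := INR_lt _ _ b; lia.
Qed.

Lemma lin_cont P Q : arc_continuous (lin P Q).
Proof.
move=> t _ eps He.
set A := Rabs (fst Q - fst P); set B := Rabs (snd Q - snd P).
have hA : 0 <= A by apply: Rabs_pos.
have hB : 0 <= B by apply: Rabs_pos.
exists (eps / (A + B + 1)); split.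
  apply: Rdiv_lt_0_compat; lra.
move=> s _ hs.
have hd : eps / (A + B + 1) * (A + B + 1) = eps by field; lra.
have h0 : 0 <= Rabs (s - t) by apply: Rabs_pos.
rewrite /lin /=; split.
- have -> : (1 - s) * fst P + s * fst Q - ((1 - t) * fst P + t * fst Q) =
     (s - t) * (fst Q - fst P) by ring.
  rewrite Rabs_mult -/A; nra.
- have -> : (1 - s) * snd P + s * snd Q - ((1 - t) * snd P + t * snd Q) =
     (s - t) * (snd Q - snd P) by ring.
  rewrite Rabs_mult -/B; nra.
Qed.

Lemma lin_inj P Q : P <> Q -> arc_injective (lin P Q).
Proof.
move=> nPQ s t _ _; rewrite /lin; case=> h1 h2.
have e1 : (s - t) * (fst Q - fst P) = 0 by lra.
have e2 : (s - t) * (snd Q - snd P) = 0 by lra.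
case: (Req_dec s t) => // nst; exfalso; apply: nPQ.
have a : fst Q - fst P = 0.
  by case: (Rmult_integral _ _ e1) => // h; exfalso; apply: nst; lra.
have b : snd Q - snd P = 0.
  by case: (Rmult_integral _ _ e2) => // h; exfalso; apply: nst; lra.
case: P Q a b {h1 h2 e1 e2} => [p1 p2] [q1 q2] /= a b; f_equal; lra.
Qed.

Lemma pos_inj : injective pos.
Proof.
move=> [[w|]|] [[w'|]|] //= E; try (case: E => *; lra).
by case: E => /code_inj ->.
Qed.


Lemma code_f i : INR (code (i, false)) = INR (2 * nat_of_ord i + 1).
Proof. by rewrite /code /= addn0. Qed.
Lemma code_t i : INR (code (i, true)) = INR (2 * nat_of_ord i + 1) + 1.
Proof. by rewrite /code /= addn1 S_INR. Qed.

Lemma pair_open (i : 'I_m) b c s : b != c -> 0 < s < 1 ->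
  INR (2 * nat_of_ord i + 1) < (1 - s) * INR (code (i, b)) + s * INR (code (i, c))
    < INR (2 * nat_of_ord i + 1) + 1.
Proof. by case: b; case: c => //= _ hs; rewrite ?code_f ?code_t; lra. Qed.

Lemma pair_closed (i : 'I_m) b c s : b != c -> 0 <= s <= 1 ->
  INR (2 * nat_of_ord i + 1) <= (1 - s) * INR (code (i, b)) + s * INR (code (i, c))
    <= INR (2 * nat_of_ord i + 1) + 1.
Proof. by case: b; case: c => //= _ hs; rewrite ?code_f ?code_t; lra. Qed.

Ltac facts := repeat match goal with
  | H : context[INR (code ?w)] |- _ =>
      lazymatch goal with
      | _ : 1 <= INR (code w) |- _ => fail
      | _ => have := code_ge1 w; intro
      end
  end.

Lemma cond3 x y z s : hedge m x y -> 0 < s < 1 -> gg x y s <> pos z.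
Proof.
case: x y z => [[[i b]|]|] [[[j c]|]|] [[[k d]|]|] //= E Hs; rewrite /gg /lin /=;
  case=> h1 h2; facts; try lra; try nra.
case/andP: E => /eqP ej bc; subst j.
exact: (not_int (pair_open i bc Hs) h1).
Qed.

Ltac finish_inj t s :=
  match goal with
  | _ : context[INR (code ?w1)], _ : context[INR (code ?w2)] |- _ =>
      tryif constr_eq w1 w2 then fail else
      let EE := fresh "EE" in
      assert (EE : INR (code w1) = INR (code w2)) by
        (first [assert (t = s) by lra | assert (t = 1 - s) by lra];
         subst t; nra);
      apply code_inj in EE; injection EE as ? ?; subst
  end.

Ltac closeHne Hne := apply: Hne; first [by left; split | by right; split].

Ltac pair_end t :=
  match goal with
  | E : is_true ((?i == ?j) && (?b != ?c)), Hs : (0 < ?s < 1)%R |- _ =>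
    let ej := fresh "ej" in let bc := fresh "bc" in let hp := fresh "hp" in
    case/andP: E => /eqP ej bc; subst j;
    have hp := pair_open i bc Hs;
    first [assert (t = 1) by lra | assert (t = 0) by lra]; subst t;
    match goal with
    | h1 : context[INR (code ?w)] |- _ => apply: (not_int hp (k := code w)); lra
    end
  end.

Lemma cond4 x y x' y' s t : hedge m x y -> hedge m x' y' ->
  ~ ((x = x' /\ y = y') \/ (x = y' /\ y = x')) ->
  0 < s < 1 -> in01 t -> gg x y s <> gg x' y' t.
Proof.
rewrite /in01.
case: x y x' y' => [[[i b]|]|] [[[j c]|]|] [[[k d]|]|] [[[l e]|]|] //= E E' Hne Hs Ht;
  rewrite /gg /lin /=; case=> h1 h2; facts; try lra; try nra;
  try (by closeHne Hne);
  try (finish_inj t s; by closeHne Hne);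
  try (by pair_end t).
- case/andP: E => /eqP ej bc; case/andP: E' => /eqP ek de; subst j l.
  have c1 := pair_open i bc Hs.
  have c2 := pair_closed k de Ht; rewrite -h1 in c2.
  have := same_int c1 c2 => eik.
  have eik' : nat_of_ord i = nat_of_ord k by lia.
  move/val_inj: eik' => eik''; subst k.
  clear -Hne bc de.
  by case: b c d e bc de Hne => [] [] [] [] //= _ _ Hne; closeHne Hne.
all: case/andP: E => /eqP ej bc; subst j; have hp := pair_open i bc Hs.
- have ht : t = 0 by lra.
  subst t; rewrite h1 in hp;
  match type of hp with context[INR (code ?w)] => apply: (not_int hp (k := code w)) end; lra.
- have ht : t = 0 by lra.
  subst t; rewrite h1 in hp;
  match type of hp with context[INR (code ?w)] => apply: (not_int hp (k := code w)) end; lra.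
- have ht : t = 1 by lra.
  subst t; rewrite h1 in hp;
  match type of hp with context[INR (code ?w)] => apply: (not_int hp (k := code w)) end; lra.
- have ht : t = 1 by lra.
  subst t; rewrite h1 in hp;
  match type of hp with context[INR (code ?w)] => apply: (not_int hp (k := code w)) end; lra.
Qed.

Lemma hedge_irr x : hedge m x x = false.
Proof. by case: x => [[[i b]|]|] //=; rewrite eqxx; case: b. Qed.

Lemma planar_hedge : planar (hedge m).
Proof.
exists pos, gg; split; first exact: pos_inj.
split.
  move=> x y E; split; first exact: lin_cont.
  split.
    apply: lin_inj => /pos_inj exy; subst y.
    by rewrite hedge_irr in E.
  rewrite /gg /lin; case: (pos x) => [a1 a2]; case: (pos y) => [b1 b2] /=.
  split; first by f_equal; ring.
  split; first by f_equal; ring.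
  by move=> t _; f_equal; ring.
split; first exact: cond3.
exact: cond4.
Qed.
End Planar.
Theorem theorem1 :
  planar (hedge (66 ^ 144)) /\ HG_is (hedge (66 ^ 144)) 12.
Proof.
split; first exact: planar_hedge.
split; last exact: upper.
apply: lower_win.
by rewrite leq_exp2r.
Qed.
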